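(* For every $\vec\beta=(\beta_1,\beta_2,\beta_3)\in\mathbb R^3$ there exists a smooth, trace-free, divergence-free symmetric $(0,2)$-tensor $\sigma$ on $\mathbb R^3$ with compact support in $A_1=\{1<|x|<2\}$, satisfying $L\sigma=0$ and \[\int_{A_1}x^p\sum_{i,j,k}(\sigma_{ij,k})^2\,dx=\beta_p\quad(p=1,2,3).\]
   Context: Cartesian coordinates on $\mathbb R^3$ with Euclidean metric; commas denote partial derivatives; trace and divergence are Euclidean. $L\sigma=\sum_{i,j}(\sigma_{ij,ij}-\sigma_{ii,jj})$. *)

(* Defs.v *)
From Stdlib Require Import Reals.
From Coquelicot Require Import Coquelicot.
Open Scope R_scope.

(* Points of R^3; coordinates are indexed 0,1,2 (paper's 1,2,3). *)
Definition pt := (R * R * R)%type.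

Definition coord (i : nat) (x : pt) : R :=
  match i with
  | 0%nat => fst (fst x)
  | 1%nat => snd (fst x)
  | _ => snd x
  end.

Definition upd (i : nat) (x : pt) (t : R) : pt :=
  match i with
  | 0%nat => (t, snd (fst x), snd x)
  | 1%nat => (fst (fst x), t, snd x)
  | _ => (fst (fst x), snd (fst x), t)
  end.

Definition enorm (x : pt) : R :=
  sqrt (coord 0 x ^ 2 + coord 1 x ^ 2 + coord 2 x ^ 2).

Definition partial (i : nat) (f : pt -> R) (x : pt) : R :=
  Derive (fun t => f (upd i x t)) (coord i x).

Fixpoint dpart (l : list nat) (f : pt -> R) : pt -> R :=
  match l with
  | nil => f
  | cons i l' => partial i (dpart l' f)
  end.

Definition smooth (f : pt -> R) : Prop :=
  forall l : list nat, List.Forall (fun i => (i < 3)%nat) l ->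
    (forall x : pt, continuous (dpart l f) x) /\
    (forall i : nat, (i < 3)%nat -> forall x : pt,
        ex_derive (fun t => dpart l f (upd i x t)) (coord i x)).

Definition sum3 (F : nat -> R) : R := F 0%nat + F 1%nat + F 2%nat.

Definition annulus1 (x : pt) : Prop := 1 < enorm x < 2.

(* f has compact support contained in A: f vanishes outside a compact
   (= closed and bounded, Heine-Borel) set K contained in A *)
Definition compact_support_in (A : pt -> Prop) (f : pt -> R) : Prop :=
  exists K : pt -> Prop,
    closed K /\ (exists M : R, forall x, K x -> enorm x <= M) /\
    (forall x, K x -> A x) /\ (forall x, ~ K x -> f x = 0).

(* symmetric (0,2)-tensor field on R^3: components sigma i j, i j < 3 *)
Definition tensor := nat -> nat -> pt -> R.

Definition symmetric (s : tensor) : Prop :=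
  forall i j, (i < 3)%nat -> (j < 3)%nat -> forall x, s i j x = s j i x.

Definition tensor_smooth (s : tensor) : Prop :=
  forall i j, (i < 3)%nat -> (j < 3)%nat -> smooth (s i j).

Definition trace_free (s : tensor) : Prop :=
  forall x, sum3 (fun i => s i i x) = 0.

Definition div_free (s : tensor) : Prop :=
  forall i, (i < 3)%nat -> forall x, sum3 (fun j => partial j (s i j) x) = 0.

Definition Lop (s : tensor) (x : pt) : R :=
  sum3 (fun i => sum3 (fun j =>
    partial j (partial i (s i j)) x - partial j (partial j (s i i)) x)).

(* Integral over R^3 of a function supported in the cube [-2,2]^3
   (in particular in A_1), as an iterated Riemann integral. *)
Definition int_cube (f : pt -> R) : R :=
  RInt (fun a => RInt (fun b => RInt (fun c => f (a, b, c)) (-2) 2) (-2) 2) (-2) 2.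

Definition grad_sq (s : tensor) (x : pt) : R :=
  sum3 (fun i => sum3 (fun j => sum3 (fun k => (partial k (s i j) x) ^ 2))).

(* Main.v *)
Require Import Defs.
From Stdlib Require Import Reals.
From Coquelicot Require Import Coquelicot.
Open Scope R_scope.
From Stdlib Require Import Lra Lia List FunctionalExtensionality Classical.


Lemma isd_val (f : R -> R) (x l l' : R) : is_derive f x l -> l = l' -> is_derive f x l'.
Proof. intros H ->; exact H. Qed.
Lemma isd_mult (f g : R -> R) (x df dg : R) : is_derive f x df -> is_derive g x dg ->
  is_derive (fun t => f t * g t) x (df * g x + f x * dg).
Proof. intros Hf Hg. apply (is_derive_mult f g x df dg Hf Hg). intros; apply Rmult_comm. Qed.
Lemma isd_plus (f g : R -> R) (x df dg : R) : is_derive f x df -> is_derive g x dg ->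
  is_derive (fun t => f t + g t) x (df + dg).
Proof. intros Hf Hg. apply (is_derive_plus f g x df dg Hf Hg). Qed.
Lemma isd_opp (f : R -> R) (x df : R) : is_derive f x df -> is_derive (fun t => - f t) x (- df).
Proof. intros Hf. apply (is_derive_opp f x df Hf). Qed.
Lemma isd_const (c x : R) : is_derive (fun _ => c) x 0.
Proof. apply (is_derive_const c x). Qed.
Lemma isd_id (x : R) : is_derive (fun t => t) x 1.
Proof. apply (is_derive_id x). Qed.
Lemma isd_comp (f g : R -> R) (x df dg : R) : is_derive f (g x) df -> is_derive g x dg ->
  is_derive (fun t => f (g t)) x (dg * df).
Proof. intros Hf Hg. apply (is_derive_comp f g x df dg Hf Hg). Qed.

Inductive Pol := Pc (c : R) | Padd (p q : Pol) | Pneg (p : Pol) | Pmx (p : Pol).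
Fixpoint pev (p : Pol) (y : R) : R :=
  match p with Pc c => c | Padd p q => pev p y + pev q y | Pneg p => - pev p y
  | Pmx p => y * pev p y end.
Fixpoint pder (p : Pol) : Pol :=
  match p with Pc _ => Pc 0 | Padd p q => Padd (pder p) (pder q) | Pneg p => Pneg (pder p)
  | Pmx p => Padd p (Pmx (pder p)) end.

Lemma pev_der p (y : R) : is_derive (pev p) y (pev (pder p) y).
Proof.
  induction p; simpl.
  - apply isd_const.
  - apply isd_plus; auto.
  - apply isd_opp; auto.
  - eapply isd_val. apply (isd_mult (fun t => t) (pev p)). apply isd_id. exact IHp. ring.
Qed.

Lemma pev_growth p : exists C d, 0 <= C /\ forall y, 0 <= y -> Rabs (pev p y) <= C * (1 + y) ^ d.
Proof.
  induction p as [c|p1 [C1 [d1 [HC1 H1]]] p2 [C2 [d2 [HC2 H2]]]|p [C [d [HC H]]]|p [C [d [HC H]]]]; simpl.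
  - exists (Rabs c), 0%nat. split. apply Rabs_pos. intros; simpl; lra.
  - exists (C1 + C2), (max d1 d2). split; [lra|]. intros y Hy.
    assert (M: forall d, (d <= max d1 d2)%nat -> (1 + y) ^ d <= (1+y) ^ (max d1 d2)).
    { intros d Hd. apply Rle_pow; [lra|exact Hd]. }
    specialize (M d1 (Nat.le_max_l _ _)) as M1. specialize (M d2 (Nat.le_max_r _ _)) as M2.
    specialize (H1 y Hy). specialize (H2 y Hy).
    eapply Rle_trans. apply Rabs_triang.
    assert (C1 * (1+y)^d1 <= C1 * (1+y)^(max d1 d2)) by (apply Rmult_le_compat_l; lra).
    assert (C2 * (1+y)^d2 <= C2 * (1+y)^(max d1 d2)) by (apply Rmult_le_compat_l; lra).
    lra.
  - exists C, d. split; auto. intros y Hy. rewrite Rabs_Ropp. auto.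
  - exists C, (S d). split; auto. intros y Hy. rewrite Rabs_mult. simpl.
    rewrite (Rabs_right y) by lra. specialize (H y Hy).
    assert (0 <= Rabs (pev p y)) by apply Rabs_pos.
    apply Rle_trans with ((1 + y) * (C * (1+y)^d)).
    + apply Rmult_le_compat; lra.
    + lra.
Qed.

Fixpoint Qs (n : nat) : Pol :=
  match n with O => Pc 1 | S n => Pmx (Pmx (Padd (Qs n) (Pneg (pder (Qs n))))) end.

Definition gH (n : nat) (u : R) : R := pev (Qs n) (/ u) * exp (- / u).

Lemma gH_der n (u : R) : u <> 0 -> is_derive (gH n) u (gH (S n) u).
Proof.
  intros Hu. unfold gH.
  eapply isd_val.
  - apply (isd_mult _ _ u (- / u ^ 2 * pev (pder (Qs n)) (/ u)) (exp (- / u) * / u ^ 2)).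
    + apply (isd_comp (pev (Qs n)) (fun t => / t) u _ (- / u ^ 2)). apply pev_der.
      auto_derive. auto. field. auto.
    + auto_derive. auto. field. auto.
  - simpl. field. auto.
Qed.

Lemma exp_INR_mult n (t : R) : exp (INR n * t) = exp t ^ n.
Proof.
  induction n. simpl. rewrite Rmult_0_l. apply exp_0.
  rewrite S_INR, Rmult_plus_distr_r, exp_plus, IHn. simpl. ring_simplify. rewrite Rmult_1_l. ring.
Qed.

Lemma pow_exp_bound m (y : R) : 0 < y -> y ^ (S m) <= INR (S m) ^ (S m) * exp y.
Proof.
  intros Hy. set (N := INR (S m)).
  assert (HN : 0 < N) by (apply lt_0_INR; lia).
  assert (E : exp y = exp (y / N) ^ (S m)).
  { rewrite <- exp_INR_mult. f_equal. fold N. field. lra. }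
  rewrite E.
  assert (y ^ S m = N ^ S m * (y / N) ^ S m).
  { rewrite <- Rpow_mult_distr. f_equal. field. lra. }
  rewrite H. apply Rmult_le_compat_l. apply pow_le; lra.
  apply pow_incr. split. apply Rlt_le, Rdiv_lt_0_compat; lra.
  pose proof (exp_ineq1_le (y / N)). lra.
Qed.

Lemma gH_bound n : exists K, 0 <= K /\ forall u, 0 < u <= 1 -> Rabs (gH n u) <= K * u ^ 2.
Proof.
  destruct (pev_growth (Qs n)) as [C [d [HC HG]]].
  set (K0 := INR (S (S d)) ^ (S (S d))).
  assert (HK0 : 0 <= K0) by (apply pow_le, pos_INR).
  exists (C * 2 ^ d * K0). split.
  { apply Rmult_le_pos; [apply Rmult_le_pos; [auto|apply pow_le; lra]|auto]. }
  intros u Hu. unfold gH. set (y := / u).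
  assert (Hy1 : 1 <= y). { unfold y. rewrite <- Rinv_1. apply Rinv_le_contravar; lra. }
  assert (Huy : u = / y). { unfold y. rewrite Rinv_inv. auto. }
  rewrite Rabs_mult, (Rabs_right (exp _)) by (left; apply exp_pos).
  specialize (HG y ltac:(lra)).
  assert (H1 : (1 + y) ^ d <= 2 ^ d * y ^ d).
  { rewrite <- Rpow_mult_distr. apply pow_incr. lra. }
  assert (H2 : y ^ (S (S d)) <= K0 * exp y) by (apply pow_exp_bound; lra).
  assert (Hey : exp (- y) * exp y = 1). { rewrite <- exp_plus. replace (-y+y) with 0 by ring. apply exp_0. }
  assert (H3 : y ^ d * exp (- y) <= K0 * u ^ 2).
  { rewrite Huy. assert (0 < y) by lra.
    apply Rmult_le_reg_r with (y ^ 2). apply pow_lt; lra.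
    replace (K0 * (/ y) ^ 2 * y ^ 2) with K0 by (field; lra).
    replace (y ^ d * exp (- y) * y ^ 2) with (y ^ (S (S d)) * exp (- y)).
    2: { simpl. ring. }
    apply Rmult_le_reg_r with (exp y). apply exp_pos.
    rewrite Rmult_assoc, Hey, Rmult_1_r. exact H2. }
  assert (0 <= y ^ d) by (apply pow_le; lra).
  assert (0 <= exp (- y)) by (left; apply exp_pos).
  apply Rle_trans with (C * (2 ^ d * y ^ d) * exp (- y)).
  { apply Rmult_le_compat_r; auto. eapply Rle_trans. apply HG.
    apply Rmult_le_compat_l; auto. }
  replace (C * (2 ^ d * y ^ d) * exp (- y)) with ((C * 2 ^ d) * (y ^ d * exp (- y))) by ring.
  apply Rle_trans with (C * 2 ^ d * (K0 * u ^ 2)); [|right; ring].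
  apply Rmult_le_compat_l.
  apply Rmult_le_pos; [auto|apply pow_le; lra]. exact H3.
Qed.

Definition H (n : nat) (u : R) : R := if Rlt_dec 0 u then gH n u else 0.

Lemma H_nonpos n u : u <= 0 -> H n u = 0.
Proof. intros. unfold H. destruct (Rlt_dec 0 u); [lra|auto]. Qed.

Lemma H_der n (u : R) : is_derive (H n) u (H (S n) u).
Proof.
  destruct (Rlt_le_dec 0 u) as [Hp|Hn].
  - unfold H at 2. destruct (Rlt_dec 0 u); [|lra].
    apply is_derive_ext_loc with (gH n).
    + apply filter_imp with (fun t : R => 0 < t).
      intros t Ht. unfold H. destruct (Rlt_dec 0 t); [auto|lra].
      apply (open_gt 0 u Hp).
    + apply gH_der. lra.
  - destruct Hn as [Hn|Hn].
    + rewrite (H_nonpos (S n)) by lra.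
      apply is_derive_ext_loc with (fun _ => 0).
      * apply filter_imp with (fun t : R => t < 0).
        intros t Ht. rewrite H_nonpos; auto; lra.
        apply (open_lt 0 u Hn).
      * apply isd_const.
    + subst u. rewrite H_nonpos by lra.
      apply is_derive_Reals. intros eps Heps.
      destruct (gH_bound n) as [K [HK HB]].
      assert (Hd : 0 < Rmin 1 (eps / (K + 1))).
      { apply Rmin_pos. lra. apply Rdiv_lt_0_compat; lra. }
      exists (mkposreal _ Hd). intros h Hh0 Hh. simpl in Hh.
      rewrite Rplus_0_l, (H_nonpos n 0) by lra.
      unfold H. destruct (Rlt_dec 0 h) as [Hp|Hnp].
      * assert (Hh1 : h <= 1). { apply Rlt_le. eapply Rlt_le_trans. 2: apply Rmin_l. 
          rewrite Rabs_right in Hh by lra. exact Hh. }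
        specialize (HB h (conj Hp Hh1)).
        assert (Hhe : h < eps / (K + 1)). { eapply Rlt_le_trans. 2: apply Rmin_r.
          rewrite Rabs_right in Hh by lra. exact Hh. }
        replace ((gH n h - 0) / h - 0) with (gH n h / h) by (field; lra).
        unfold Rdiv. rewrite Rabs_mult, Rabs_inv, (Rabs_right h) by lra.
        apply Rle_lt_trans with (K * h ^ 2 * / h).
        { apply Rmult_le_compat_r; auto. left; apply Rinv_0_lt_compat; lra. }
        replace (K * h ^ 2 * / h) with (K * h) by (field; lra).
        apply Rle_lt_trans with ((K + 1) * h). nra.
        apply Rmult_lt_reg_r with (/ (K + 1)). apply Rinv_0_lt_compat; lra.
        replace ((K + 1) * h * / (K + 1)) with h by (field; lra). exact Hhe.
      * replace ((0 - 0) / h - 0) with 0 by (field; auto). rewrite Rabs_R0. lra.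
Qed.


Definition rr : R := 1/5.
Definition Fb (i : nat) (t : R) : R := H i (rr + t).
Definition Gb (j : nat) (t : R) : R := (-1) ^ j * H j (rr - t).

Lemma Fb_der i (t : R) : is_derive (Fb i) t (Fb (S i) t).
Proof.
  unfold Fb. eapply isd_val. apply (isd_comp (H i) (fun s => rr + s) t (H (S i) (rr + t)) 1).
  apply H_der. auto_derive; auto; ring. ring.
Qed.
Lemma Gb_der j (t : R) : is_derive (Gb j) t (Gb (S j) t).
Proof.
  unfold Gb. eapply isd_val. apply (isd_mult (fun _ => (-1)^j) (fun s => H j (rr - s)) t 0 (-1 * H (S j) (rr - t))).
  apply isd_const. apply (isd_comp (H j) (fun s => rr - s) t (H (S j) (rr - t)) (-1)).
  apply H_der. auto_derive; auto; ring. simpl. ring.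
Qed.

Definition stepW (p : nat * nat) : list (nat * nat) := (S (fst p), snd p) :: (fst p, S (snd p)) :: nil.
Fixpoint W (n : nat) : list (nat * nat) :=
  match n with O => (0%nat, 0%nat) :: nil | S n => flat_map stepW (W n) end.
Definition sumW (w : list (nat * nat)) (t : R) : R :=
  fold_right (fun p acc => Fb (fst p) t * Gb (snd p) t + acc) 0 w.

Lemma sumW_app w1 w2 t : sumW (w1 ++ w2) t = sumW w1 t + sumW w2 t.
Proof. induction w1; simpl. ring. unfold sumW in *. simpl. rewrite IHw1. ring. Qed.

Lemma sumW_der w (t : R) : is_derive (sumW w) t (sumW (flat_map stepW w) t).
Proof.
  induction w as [|p w IH].
  - simpl. apply isd_const.
  - change (is_derive (fun t => Fb (fst p) t * Gb (snd p) t + sumW w t) t (sumW (flat_map stepW (p::w)) t)).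
    eapply isd_val. apply isd_plus. apply isd_mult. apply Fb_der. apply Gb_der. exact IH.
    replace (flat_map stepW (p::w)) with (stepW p ++ flat_map stepW w) by reflexivity.
    rewrite sumW_app. unfold sumW. simpl. ring.
Qed.

Definition DE (n : nat) (t : R) : R := sumW (W n) t.

Lemma DE_der n (t : R) : is_derive (DE n) t (DE (S n) t).
Proof. unfold DE. simpl. apply sumW_der. Qed.

Lemma DE_0 t : DE 0 t = H 0 (rr + t) * H 0 (rr - t).
Proof. unfold DE, sumW, Fb, Gb. simpl. ring. Qed.

Lemma sumW_out w t : rr <= Rabs t -> sumW w t = 0.
Proof.
  intros Ht. induction w as [|p w IH]; simpl. auto.
  unfold sumW in *; simpl. rewrite IH. unfold Fb, Gb.
  destruct (Rle_dec 0 t).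
  - rewrite Rabs_right in Ht by lra. rewrite (H_nonpos _ (rr - t)) by lra. ring.
  - rewrite Rabs_left in Ht by lra. rewrite (H_nonpos _ (rr + t)) by lra. ring.
Qed.

Lemma DE_out n t : rr <= Rabs t -> DE n t = 0.
Proof. apply sumW_out. Qed.

Lemma DE_cont n (t : R) : continuous (DE n) t.
Proof. apply (ex_derive_continuous (K := R_AbsRing) (V := R_NormedModule)). eexists. apply DE_der. Qed.

Lemma DE_parity n : forall t, DE n (- t) = (-1) ^ n * DE n t.
Proof.
  induction n; intros t.
  - rewrite !DE_0. simpl. replace (rr + - t) with (rr - t) by ring.
    replace (rr - - t) with (rr + t) by ring. ring.
  - assert (D1 : is_derive (fun s => DE n (- s)) t (- DE (S n) (- t))).
    { eapply isd_val. apply (isd_comp (DE n) (fun s => - s) t (DE (S n) (- t)) (-1)). apply DE_der.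
      auto_derive; auto; ring. ring. }
    assert (D2 : is_derive (fun s => DE n (- s)) t ((-1) ^ n * DE (S n) t)).
    { eapply is_derive_ext. intros s. symmetry. apply IHn.
      eapply isd_val. apply (isd_mult (fun _ => (-1)^n) (DE n) t 0 (DE (S n) t)).
      apply isd_const. apply DE_der. ring. }
    apply is_derive_unique in D1. apply is_derive_unique in D2.
    rewrite D1 in D2. simpl.
    replace (DE (S n) (- t)) with (- ((-1) ^ n * DE (S n) t)) by lra. ring.
Qed.

Lemma DE_nonzero n : exists t, DE n t <> 0.
Proof.
  induction n as [|n [t0 Ht0]].
  - exists 0. rewrite DE_0. unfold H. destruct (Rlt_dec 0 (rr + 0)) as [_|C];
      [|unfold rr in C; lra].
    destruct (Rlt_dec 0 (rr - 0)) as [_|C]; [|unfold rr in C; lra].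
    unfold gH. simpl. assert (0 < exp (- / (rr + 0))) by apply exp_pos.
    assert (0 < exp (- / (rr - 0))) by apply exp_pos. nra.
  - destruct (Classical_Prop.classic (exists t, DE (S n) t <> 0)) as [E|E]; auto.
    exfalso. apply Ht0.
    assert (Z : forall t, DE (S n) t = 0).
    { intros t. apply Classical_Prop.NNPP. intros C. apply E. eauto. }
    assert (Hm : DE n (-1) = 0) by (apply DE_out; rewrite Rabs_left; unfold rr; lra).
    destruct (MVT_gen (DE n) (-1) t0 (DE (S n))) as [c [_ Hc]].
    + intros; apply DE_der.
    + intros. apply continuity_pt_filterlim. apply DE_cont.
    + rewrite Z, Hm in Hc. lra.
Qed.


Record dterm := DT { dc : R; di : nat; dj : nat; dk : nat }.
Definition tsem (s : pt) (t : dterm) (x : pt) : R :=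
  dc t * DE (di t) (coord 0 x - coord 0 s) * DE (dj t) (coord 1 x - coord 1 s)
  * DE (dk t) (coord 2 x - coord 2 s).
Fixpoint dsem (s : pt) (L : list dterm) (x : pt) : R :=
  match L with nil => 0 | t :: L => tsem s t x + dsem s L x end.
Definition dpt (m : nat) (t : dterm) : dterm :=
  match m with
  | 0%nat => DT (dc t) (S (di t)) (dj t) (dk t)
  | 1%nat => DT (dc t) (di t) (S (dj t)) (dk t)
  | _ => DT (dc t) (di t) (dj t) (S (dk t)) end.
Definition dmap (m : nat) (L : list dterm) := map (dpt m) L.

Lemma isd_DEsh i (a v : R) : is_derive (fun u => DE i (u - a)) v (DE (S i) (v - a)).
Proof.
  eapply isd_val. apply (isd_comp (DE i) (fun u => u - a) v (DE (S i) (v - a)) 1).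
  apply DE_der. auto_derive; auto; ring. ring.
Qed.

Lemma isd_ext (f g : R -> R) (x l : R) : (forall t : R, f t = g t) -> is_derive f x l -> is_derive g x l.
Proof. intros; apply (is_derive_ext f g); auto. Qed.
Lemma isd_m3a (f : R -> R) (a b c v df : R) : is_derive f v df ->
  is_derive (fun u => a * f u * b * c) v (a * df * b * c).
Proof.
  intros Hf. apply (isd_ext (fun u => (a * b * c) * f u)). intros t; ring.
  eapply isd_val. apply is_derive_scal, Hf. ring.
Qed.
Lemma isd_m3b (f : R -> R) (a b c v df : R) : is_derive f v df ->
  is_derive (fun u => a * b * f u * c) v (a * b * df * c).
Proof.
  intros Hf. apply (isd_ext (fun u => (a * b * c) * f u)). intros t; ring.
  eapply isd_val. apply is_derive_scal, Hf. ring.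
Qed.
Lemma isd_m3c (f : R -> R) (a b c v df : R) : is_derive f v df ->
  is_derive (fun u => a * b * c * f u) v (a * b * c * df).
Proof.
  intros Hf. apply (isd_ext (fun u => (a * b * c) * f u)). intros t; ring.
  eapply isd_val. apply is_derive_scal, Hf. ring.
Qed.

Lemma tsem_der m s t (x : pt) :
  is_derive (fun u => tsem s t (upd m x u)) (coord m x) (tsem s (dpt m t) x).
Proof.
  destruct x as [[x1 x2] x3]. unfold tsem.
  destruct m as [|[|m]]; simpl.
  - apply isd_m3a, isd_DEsh.
  - apply isd_m3b, isd_DEsh.
  - apply isd_m3c, isd_DEsh.
Qed.

Lemma dsem_der m s L (x : pt) :
  is_derive (fun u => dsem s L (upd m x u)) (coord m x) (dsem s (dmap m L) x).
Proof.
  induction L as [|t L IH]; simpl.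
  - apply isd_const.
  - apply isd_plus. apply tsem_der. exact IH.
Qed.

Definition sh (k : nat) : pt :=
  match k with
  | 0%nat => (3/2, 0, 0) | 1%nat => (0, 3/2, 0) | 2%nat => (0, 0, 3/2)
  | 3%nat => (-3/2, 0, 0) | 4%nat => (0, -3/2, 0) | _ => (0, 0, -3/2) end.

Definition sum6 (f : nat -> R) : R := f 0%nat + f 1%nat + f 2%nat + f 3%nat + f 4%nat + f 5%nat.

Definition Sig (c : nat -> R) (L : list dterm) (x : pt) : R :=
  sum6 (fun k => c k * dsem (sh k) L x).

Lemma Sig_der c m L (x : pt) :
  is_derive (fun u => Sig c L (upd m x u)) (coord m x) (Sig c (dmap m L) x).
Proof.
  unfold Sig, sum6.
  repeat apply isd_plus; apply (is_derive_scal (fun u => dsem _ L (upd m x u))); apply dsem_der.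
Qed.

Lemma partial_Sig c m L : partial m (Sig c L) = Sig c (dmap m L).
Proof.
  apply functional_extensionality. intros x. unfold partial. apply is_derive_unique.
  apply Sig_der.
Qed.

Fixpoint dmapl (l : list nat) (L : list dterm) : list dterm :=
  match l with nil => L | i :: l => dmap i (dmapl l L) end.

Lemma dpart_Sig c l L : dpart l (Sig c L) = Sig c (dmapl l L).
Proof.
  induction l; simpl. auto. rewrite IHl. apply partial_Sig.
Qed.

Lemma cont_coord i (x : pt) : continuous (fun y : pt => coord i y) x.
Proof.
  destruct x as [[x1 x2] x3].
  destruct i as [|[|i]]; simpl.
  - apply (continuous_comp (fun y : pt => fst y) (fun y : R * R => fst y)).
    apply continuous_fst. apply continuous_fst.
  - apply (continuous_comp (fun y : pt => fst y) (fun y : R * R => snd y)).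
    apply continuous_fst. apply continuous_snd.
  - apply continuous_snd.
Qed.

Lemma cont_Rmult (f g : pt -> R) (x : pt) : continuous f x -> continuous g x ->
  continuous (fun y => f y * g y) x.
Proof. intros. apply (continuous_mult f g x); auto. Qed.
Lemma cont_Rplus (f g : pt -> R) (x : pt) : continuous f x -> continuous g x ->
  continuous (fun y => f y + g y) x.
Proof. intros. apply (continuous_plus f g x); auto. Qed.
Lemma cont_Rconst (c : R) (x : pt) : continuous (fun _ : pt => c) x.
Proof. apply continuous_const. Qed.

Lemma cont_DEsh n i a (x : pt) : continuous (fun y : pt => DE n (coord i y - a)) x.
Proof.
  apply (continuous_comp (fun y : pt => coord i y - a) (DE n)).
  - apply (continuous_minus (fun y : pt => coord i y) (fun _ => a)). apply cont_coord.
    apply continuous_const.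
  - apply DE_cont.
Qed.

Lemma dsem_cont s L (x : pt) : continuous (dsem s L) x.
Proof.
  induction L as [|t L IH]; simpl.
  - apply cont_Rconst.
  - apply cont_Rplus; auto. unfold tsem.
    repeat apply cont_Rmult; try apply cont_Rconst; apply cont_DEsh.
Qed.

Lemma Sig_cont c L (x : pt) : continuous (Sig c L) x.
Proof.
  unfold Sig, sum6. repeat apply cont_Rplus; apply cont_Rmult; try apply cont_Rconst; apply dsem_cont.
Qed.

Lemma Sig_smooth c L : smooth (Sig c L).
Proof.
  intros l _. rewrite dpart_Sig. split.
  - intros; apply Sig_cont.
  - intros i _ x. eexists. apply Sig_der.
Qed.


Definition SL (i j : nat) : list dterm :=
  match i, j with
  | 0%nat, 0%nat => DT 2 1 3 0 :: nil
  | 1%nat, 1%nat => DT 2 3 1 0 :: nil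
  | 2%nat, 2%nat => DT (-2) 3 1 0 :: DT (-2) 1 3 0 :: nil
  | 0%nat, 1%nat | 1%nat, 0%nat => DT (-2) 2 2 0 :: DT (-1) 2 0 2 :: DT (-1) 0 2 2 :: nil
  | 0%nat, 2%nat | 2%nat, 0%nat => DT 1 2 1 1 :: DT 1 0 3 1 :: nil
  | 1%nat, 2%nat | 2%nat, 1%nat => DT 1 3 0 1 :: DT 1 1 2 1 :: nil
  | _, _ => nil
  end.

Definition sigma (c : nat -> R) : tensor := fun i j => Sig c (SL i j).

Lemma sigma_smooth c : tensor_smooth (sigma c).
Proof. intros i j _ _. apply Sig_smooth. Qed.

Lemma sigma_sym c : symmetric (sigma c).
Proof.
  intros i j Hi Hj x. unfold sigma.
  destruct i as [|[|[|i]]]; destruct j as [|[|[|j]]]; try lia; reflexivity.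
Qed.

Lemma box_trace s x : dsem s (SL 0 0) x + dsem s (SL 1 1) x + dsem s (SL 2 2) x = 0.
Proof. unfold SL, dsem, tsem; simpl. ring. Qed.

Lemma sigma_trace c : trace_free (sigma c).
Proof.
  intros x. unfold sum3, sigma.
  transitivity (sum6 (fun k => c k * (dsem (sh k) (SL 0 0) x + dsem (sh k) (SL 1 1) x + dsem (sh k) (SL 2 2) x))).
  unfold Sig, sum6; ring.
  unfold sum6. rewrite !box_trace. ring.
Qed.

Lemma box_div i s x : (i < 3)%nat ->
  dsem s (dmap 0 (SL i 0)) x + dsem s (dmap 1 (SL i 1)) x + dsem s (dmap 2 (SL i 2)) x = 0.
Proof.
  intros Hi. destruct i as [|[|[|i]]]; try lia; unfold SL, dmap, dsem, tsem; simpl; ring.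
Qed.

Lemma sigma_div c : div_free (sigma c).
Proof.
  intros i Hi x. unfold sum3, sigma. rewrite !partial_Sig.
  transitivity (sum6 (fun k => c k * (dsem (sh k) (dmap 0 (SL i 0)) x + dsem (sh k) (dmap 1 (SL i 1)) x + dsem (sh k) (dmap 2 (SL i 2)) x))).
  unfold Sig, sum6; ring.
  unfold sum6. rewrite !(box_div i) by exact Hi. ring.
Qed.

Definition Lbox (s : pt) (x : pt) : R :=
  sum3 (fun i => sum3 (fun j =>
    dsem s (dmap j (dmap i (SL i j))) x - dsem s (dmap j (dmap j (SL i i))) x)).

Lemma Lbox_0 s x : Lbox s x = 0.
Proof. unfold Lbox, sum3, SL, dmap, dsem, tsem; simpl. ring. Qed.

Lemma sigma_L c x : Lop (sigma c) x = 0.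
Proof.
  unfold Lop, sigma. unfold sum3. rewrite !partial_Sig.
  transitivity (sum6 (fun k => c k * Lbox (sh k) x)).
  unfold Lbox, Sig, sum6, sum3; simpl; ring.
  unfold sum6. rewrite !Lbox_0. ring.
Qed.


Definition inb (s x : pt) : Prop :=
  (coord 0 s - rr < coord 0 x < coord 0 s + rr) /\
  (coord 1 s - rr < coord 1 x < coord 1 s + rr) /\
  (coord 2 s - rr < coord 2 x < coord 2 s + rr).

Lemma tsem_out s t x : ~ inb s x -> tsem s t x = 0.
Proof.
  intros Hn. unfold tsem.
  destruct (Rle_dec rr (Rabs (coord 0 x - coord 0 s))) as [h0|h0].
  { rewrite (DE_out (di t) _ h0); ring. }
  destruct (Rle_dec rr (Rabs (coord 1 x - coord 1 s))) as [h1|h1].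
  { rewrite (DE_out (dj t) _ h1); ring. }
  destruct (Rle_dec rr (Rabs (coord 2 x - coord 2 s))) as [h2|h2].
  { rewrite (DE_out (dk t) _ h2); ring. }
  exfalso; apply Hn. apply Rnot_le_lt in h0, h1, h2.
  apply Rabs_def2 in h0, h1, h2. unfold inb. lra.
Qed.

Lemma dsem_out s L x : ~ inb s x -> dsem s L x = 0.
Proof.
  intros Hn. induction L; simpl. auto. rewrite tsem_out by auto. rewrite IHL. ring.
Qed.

Definition vv (x : pt) : R := coord 0 x * coord 0 x + coord 1 x * coord 1 x + coord 2 x * coord 2 x.
Definition KK (x : pt) : Prop := 36/25 <= vv x /\ vv x <= 361/100.

Lemma inb_KK k x : (k < 6)%nat -> inb (sh k) x -> KK x.
Proof.
  intros Hk Hb. unfold inb, KK, vv, rr in *.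
  destruct x as [[x1 x2] x3].
  destruct k as [|[|[|[|[|[|k]]]]]]; try lia; simpl in *; split; nra.
Qed.

Lemma Sig_out c L x : ~ KK x -> Sig c L x = 0.
Proof.
  intros Hn. unfold Sig, sum6.
  rewrite !dsem_out; [ring| intros Hb; apply Hn; eapply inb_KK; [|exact Hb]; lia ..].
Qed.

Lemma vv_cont (x : pt) : continuous vv x.
Proof.
  unfold vv. repeat apply cont_Rplus; apply cont_Rmult; apply cont_coord.
Qed.

Lemma KK_closed : closed KK.
Proof.
  apply (closed_comp vv (fun u => 36/25 <= u /\ u <= 361/100)).
  - intros x. apply vv_cont.
  - apply closed_and. apply closed_ge. apply closed_le.
Qed.

Lemma KK_annulus x : KK x -> annulus1 x.
Proof.
  unfold KK, annulus1, enorm. intros [H1 H2].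
  assert (E : coord 0 x ^ 2 + coord 1 x ^ 2 + coord 2 x ^ 2 = vv x) by (unfold vv; ring).
  rewrite E. split.
  - rewrite <- sqrt_1. apply sqrt_lt_1; lra.
  - replace 2 with (sqrt (2 * 2)) by (apply sqrt_square; lra).
    apply sqrt_lt_1; lra.
Qed.

Lemma sigma_support c i j : compact_support_in annulus1 (sigma c i j).
Proof.
  exists KK. split; [apply KK_closed|]. split.
  - exists 2. intros x Hx. apply KK_annulus in Hx. unfold annulus1 in Hx. lra.
  - split. apply KK_annulus. intros x Hx. apply Sig_out. auto.
Qed.

Lemma onebox x : exists k0, (k0 < 6)%nat /\ forall k, (k < 6)%nat -> k <> k0 -> ~ inb (sh k) x.
Proof.
  destruct x as [[x1 x2] x3].
  assert (T : forall k0, inb (sh k0) (x1,x2,x3) -> (k0 < 6)%nat ->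
     forall k, (k < 6)%nat -> k <> k0 -> ~ inb (sh k) (x1,x2,x3)).
  { intros k0 H0 Hk0 k Hk Hne Hb. unfold inb, rr in *.
    destruct k0 as [|[|[|[|[|[|k0]]]]]]; try lia;
    destruct k as [|[|[|[|[|[|k]]]]]]; try lia; simpl in *; lra. }
  destruct (classic (inb (sh 0) (x1,x2,x3))). exists 0%nat; split; [lia|apply T; auto; lia].
  destruct (classic (inb (sh 1) (x1,x2,x3))). exists 1%nat; split; [lia|apply T; auto; lia].
  destruct (classic (inb (sh 2) (x1,x2,x3))). exists 2%nat; split; [lia|apply T; auto; lia].
  destruct (classic (inb (sh 3) (x1,x2,x3))). exists 3%nat; split; [lia|apply T; auto; lia].
  destruct (classic (inb (sh 4) (x1,x2,x3))). exists 4%nat; split; [lia|apply T; auto; lia].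
  exists 5%nat; split; [lia|]. intros k Hk Hne.
  destruct k as [|[|[|[|[|[|k]]]]]]; try lia; auto.
Qed.

Definition gb (k : nat) (x : pt) : R :=
  sum3 (fun i => sum3 (fun j => sum3 (fun m => (dsem (sh k) (dmap m (SL i j)) x) ^ 2))).

Lemma grad_decomp c x : grad_sq (sigma c) x = sum6 (fun k => c k ^ 2 * gb k x).
Proof.
  destruct (onebox x) as [k0 [Hk0 Ho]].
  assert (Z : forall k L, (k < 6)%nat -> k <> k0 -> dsem (sh k) L x = 0).
  { intros k L Hk Hne. apply dsem_out. apply Ho; auto. }
  Ltac zap Z := repeat (rewrite (Z 0%nat) by lia); repeat (rewrite (Z 1%nat) by lia);
    repeat (rewrite (Z 2%nat) by lia); repeat (rewrite (Z 3%nat) by lia);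
    repeat (rewrite (Z 4%nat) by lia); repeat (rewrite (Z 5%nat) by lia).
  assert (S1 : forall L, Sig c L x = c k0 * dsem (sh k0) L x).
  { intros L. unfold Sig, sum6.
    destruct k0 as [|[|[|[|[|[|k0]]]]]]; try lia; zap Z; ring. }
  assert (S2 : sum6 (fun k => c k ^ 2 * gb k x) = c k0 ^ 2 * gb k0 x).
  { unfold sum6, gb, sum3.
    destruct k0 as [|[|[|[|[|[|k0]]]]]]; try lia; zap Z; ring. }
  rewrite S2. unfold grad_sq, sigma, gb, sum3. rewrite !partial_Sig, !S1. ring.
Qed.


Lemma isR_val (f : R -> R) (a b l l' : R) : is_RInt f a b l -> l = l' -> is_RInt f a b l'.
Proof. intros H ->; exact H. Qed.
Lemma isR_ext (f g : R -> R) (a b l : R) : (forall t, f t = g t) -> is_RInt f a b l -> is_RInt g a b l.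
Proof. intros E Hf. apply (is_RInt_ext f g). intros; apply E. exact Hf. Qed.
Lemma isR_plus (f g : R -> R) (a b lf lg : R) : is_RInt f a b lf -> is_RInt g a b lg ->
  is_RInt (fun t => f t + g t) a b (lf + lg).
Proof. intros. apply (is_RInt_plus f g); auto. Qed.
Lemma isR_zero (a b : R) : is_RInt (fun _ => 0) a b 0.
Proof. eapply isR_val. apply (is_RInt_const a b 0). unfold scal; simpl; unfold mult; simpl; ring. Qed.

Definition I1 (f : R -> R) : R := RInt f (-2) 2.

Lemma isR_lin (f : R -> R) (K : R) : (forall y, continuous f y) ->
  is_RInt (fun u => K * f u) (-2) 2 (K * I1 f).
Proof.
  intros Hc. unfold I1. apply (is_RInt_scal (V := R_NormedModule) f (-2) 2 K). apply (RInt_correct (V := R_CompleteNormedModule)).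
  apply ex_RInt_continuous. intros; apply Hc.
Qed.

Lemma odd1D (f : R -> R) : ex_RInt f (-2) 2 -> (forall t, f (- t) = - f t) -> RInt f (-2) 2 = 0.
Proof.
  intros He Ho. pose proof (RInt_correct _ _ _ He) as Hi.
  set (l := RInt f (-2) 2) in *.
  assert (H1 : is_RInt f (- 2) (- (-2)) l). { replace (- 2) with (-2) by ring. replace (- (-2)) with 2 by ring. exact Hi. }
  apply (is_RInt_comp_opp f 2 (-2) l) in H1.
  assert (H2 : is_RInt f 2 (-2) l).
  { eapply isR_ext. 2: exact H1. intros t. simpl. rewrite Ho. unfold opp; simpl. ring. }
  apply (is_RInt_swap f (-2) 2 l) in H2.
  pose proof (is_RInt_unique _ _ _ _ H2) as HU. fold l in HU. unfold opp in HU; simpl in HU. lra.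
Qed.

Record pterm := PT { pc : R; pf : R -> R; pg : R -> R; ph : R -> R }.
Definition ptsem (t : pterm) (x : pt) : R :=
  pc t * pf t (coord 0 x) * pg t (coord 1 x) * ph t (coord 2 x).
Fixpoint psem (L : list pterm) (x : pt) : R :=
  match L with nil => 0 | t :: L => ptsem t x + psem L x end.
Fixpoint psem2 (L : list pterm) (a b : R) : R :=
  match L with nil => 0 | t :: L => pc t * pf t a * pg t b * I1 (ph t) + psem2 L a b end.
Fixpoint psem1 (L : list pterm) (a : R) : R :=
  match L with nil => 0 | t :: L => pc t * pf t a * I1 (pg t) * I1 (ph t) + psem1 L a end.
Fixpoint intval (L : list pterm) : R :=
  match L with nil => 0 | t :: L => pc t * I1 (pf t) * I1 (pg t) * I1 (ph t) + intval L end.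

Definition goodt (t : pterm) : Prop :=
  forall y, continuous (pf t) y /\ continuous (pg t) y /\ continuous (ph t) y.
Definition good (L : list pterm) : Prop := List.Forall goodt L.

Lemma lev3 L a b : good L -> is_RInt (fun c => psem L (a, b, c)) (-2) 2 (psem2 L a b).
Proof.
  intros G. induction G as [|t L Gt G IH]; simpl.
  - apply isR_zero.
  - apply isR_plus; auto. unfold ptsem; simpl.
    apply (isR_lin (ph t) (pc t * pf t a * pg t b)). apply Gt.
Qed.

Lemma lev2 L a : good L -> is_RInt (fun b => psem2 L a b) (-2) 2 (psem1 L a).
Proof.
  intros G. induction G as [|t L Gt G IH]; simpl.
  - apply isR_zero.
  - apply isR_plus; auto. eapply isR_val. eapply isR_ext.
    2: apply (isR_lin (pg t) (pc t * pf t a * I1 (ph t))). intros; simpl; ring. apply Gt. ring.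
Qed.

Lemma lev1 L : good L -> is_RInt (fun a => psem1 L a) (-2) 2 (intval L).
Proof.
  intros G. induction G as [|t L Gt G IH]; simpl.
  - apply isR_zero.
  - apply isR_plus; auto. eapply isR_val. eapply isR_ext.
    2: apply (isR_lin (pf t) (pc t * I1 (pg t) * I1 (ph t))). intros; simpl; ring. apply Gt. ring.
Qed.

Lemma E3 L a b : good L -> RInt (fun c => psem L (a, b, c)) (-2) 2 = psem2 L a b.
Proof. intros; apply is_RInt_unique, lev3; auto. Qed.
Lemma E2 L a : good L -> RInt (fun b => RInt (fun c => psem L (a, b, c)) (-2) 2) (-2) 2 = psem1 L a.
Proof.
  intros G. replace (fun b => RInt (fun c => psem L (a, b, c)) (-2) 2) with (psem2 L a).
  apply is_RInt_unique, lev2; auto.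
  apply functional_extensionality; intros; symmetry; apply E3; auto.
Qed.

Lemma int_cube_psem L : good L -> int_cube (psem L) = intval L.
Proof.
  intros G. unfold int_cube.
  replace (fun a => RInt (fun b => RInt (fun c => psem L (a, b, c)) (-2) 2) (-2) 2) with (psem1 L).
  apply is_RInt_unique, lev1; auto.
  apply functional_extensionality; intros; symmetry; apply E2; auto.
Qed.

Lemma int_cube_ext (f g : pt -> R) : (forall x, f x = g x) -> int_cube f = int_cube g.
Proof. intros E. replace f with g. auto. apply functional_extensionality; intros; auto. Qed.

Lemma int_cube_nonneg L : good L -> (forall x, 0 <= psem L x) -> 0 <= int_cube (psem L).
Proof.
  intros G Hp. rewrite int_cube_psem by auto.
  assert (P2 : forall a b, 0 <= psem2 L a b).
  { intros a b. rewrite <- E3 by auto. apply RInt_ge_0. lra.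
    eexists; apply lev3; auto. intros; apply Hp. }
  assert (P1 : forall a, 0 <= psem1 L a).
  { intros a. rewrite <- (is_RInt_unique _ _ _ _ (lev2 L a G)). apply RInt_ge_0. lra.
    eexists; apply lev2; auto. intros; apply P2. }
  rewrite <- (is_RInt_unique _ _ _ _ (lev1 L G)). apply RInt_ge_0. lra.
  eexists; apply lev1; auto. intros; apply P1.
Qed.

Definition refl (q : nat) (x : pt) : pt := upd q x (- coord q x).

Lemma RInt_zero_fun (f : R -> R) : (forall t, f t = 0) -> RInt f (-2) 2 = 0.
Proof.
  intros Z. apply is_RInt_unique. eapply isR_ext. 2: apply isR_zero. intros; rewrite Z; auto.
Qed.

Lemma RInt_neg_fun (f g : R -> R) : ex_RInt f (-2) 2 -> (forall t, g t = - f t) ->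
  RInt g (-2) 2 = - RInt f (-2) 2.
Proof.
  intros He E. apply is_RInt_unique. eapply isR_val. eapply isR_ext.
  2: apply (is_RInt_opp (V := R_NormedModule) f (-2) 2 _ (RInt_correct (V := R_CompleteNormedModule) _ _ _ He)).
  intros; simpl; rewrite E; auto. reflexivity.
Qed.

Lemma int_cube_odd L q : good L -> (forall x, psem L (refl q x) = - psem L x) ->
  int_cube (psem L) = 0.
Proof.
  intros G Ho. rewrite int_cube_psem by auto.
  rewrite <- (is_RInt_unique _ _ _ _ (lev1 L G)).
  assert (ex3 : forall a b, ex_RInt (fun c => psem L (a, b, c)) (-2) 2) by (intros; eexists; apply lev3; auto).
  assert (ex2 : forall a, ex_RInt (fun b => psem2 L a b) (-2) 2) by (intros; eexists; apply lev2; auto).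
  assert (ex1 : ex_RInt (fun a => psem1 L a) (-2) 2) by (eexists; apply lev1; auto).
  assert (P2 : forall a b, psem2 L a b = RInt (fun c => psem L (a, b, c)) (-2) 2) by (intros; symmetry; apply E3; auto).
  assert (P1 : forall a, psem1 L a = RInt (fun b => psem2 L a b) (-2) 2)
    by (intros; symmetry; apply (is_RInt_unique _ _ _ _ (lev2 L a G))).
  destruct q as [|[|q]].
  - apply odd1D; auto. intros a. rewrite !P1.
    apply RInt_neg_fun; auto. intros b. rewrite !P2. apply RInt_neg_fun; auto.
    intros c. apply (Ho (a, b, c)).
  - apply RInt_zero_fun. intros a. rewrite P1. apply odd1D; auto.
    intros b. rewrite !P2. apply RInt_neg_fun; auto. intros c. apply (Ho (a, b, c)).
  - apply RInt_zero_fun. intros a. rewrite P1. apply RInt_zero_fun. intros b. rewrite P2.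
    apply odd1D; auto. intros c. apply (Ho (a, b, c)).
Qed.


Definition topt (s : pt) (t : dterm) : pterm :=
  PT (dc t) (fun u => DE (di t) (u - coord 0 s)) (fun u => DE (dj t) (u - coord 1 s))
     (fun u => DE (dk t) (u - coord 2 s)).
Definition pmul (a b : pterm) : pterm :=
  PT (pc a * pc b) (fun u => pf a u * pf b u) (fun u => pg a u * pg b u) (fun u => ph a u * ph b u).
Definition plmul (L1 L2 : list pterm) : list pterm := flat_map (fun a => map (pmul a) L2) L1.
Definition psq (L : list pterm) := plmul L L.
Definition pscale (e : R) (L : list pterm) : list pterm :=
  map (fun t => PT (e * pc t) (pf t) (pg t) (ph t)) L.

Lemma psem_app L1 L2 x : psem (L1 ++ L2) x = psem L1 x + psem L2 x.
Proof. induction L1; simpl. ring. rewrite IHL1. ring. Qed.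
Lemma intval_app L1 L2 : intval (L1 ++ L2) = intval L1 + intval L2.
Proof. induction L1; simpl. ring. rewrite IHL1. ring. Qed.
Lemma psem_topt s L x : psem (map (topt s) L) x = dsem s L x.
Proof. induction L; simpl. auto. rewrite IHL. reflexivity. Qed.
Lemma psem_pmulmap a L x : psem (map (pmul a) L) x = ptsem a x * psem L x.
Proof. induction L; simpl. ring. rewrite IHL. unfold ptsem, pmul; simpl. ring. Qed.
Lemma psem_plmul L1 L2 x : psem (plmul L1 L2) x = psem L1 x * psem L2 x.
Proof.
  induction L1; simpl. ring. unfold plmul in *. simpl. rewrite psem_app, psem_pmulmap, IHL1. ring.
Qed.
Lemma psem_psq L x : psem (psq L) x = (psem L x) ^ 2.
Proof. unfold psq. rewrite psem_plmul. ring. Qed.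
Lemma psem_pscale e L x : psem (pscale e L) x = e * psem L x.
Proof. induction L; simpl. ring. rewrite IHL. unfold ptsem; simpl. ring. Qed.
Lemma intval_pscale e L : intval (pscale e L) = e * intval L.
Proof. induction L; simpl. ring. rewrite IHL. ring. Qed.

Lemma good_app L1 L2 : good L1 -> good L2 -> good (L1 ++ L2).
Proof. intros; apply List.Forall_app; auto. Qed.
Lemma good_pscale e L : good L -> good (pscale e L).
Proof. intros G. induction G; simpl; constructor; auto. Qed.
Lemma contR_mult (f g : R -> R) (y : R) : continuous f y -> continuous g y -> continuous (fun u => f u * g u) y.
Proof. intros. apply (continuous_mult f g); auto. Qed.
Lemma good_plmul L1 L2 : good L1 -> good L2 -> good (plmul L1 L2).
Proof.
  intros G1 G2. induction G1 as [|a L1 Ga G1 IH]; simpl. constructor.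
  unfold plmul in *; simpl. apply good_app; auto.
  clear IH. induction G2 as [|b L2 Gb G2 IH2]; simpl; constructor; auto.
  intros y. destruct (Ga y) as [A1 [A2 A3]]. destruct (Gb y) as [B1 [B2 B3]].
  unfold pmul; simpl. repeat split; apply contR_mult; auto.
Qed.
Lemma contR_DEsh n a (y : R) : continuous (fun u => DE n (u - a)) y.
Proof.
  apply (continuous_comp (fun u : R => u - a) (DE n)).
  apply (continuous_minus (fun u : R => u) (fun _ => a)). apply continuous_id. apply continuous_const.
  apply DE_cont.
Qed.
Lemma good_topt s L : good (map (topt s) L).
Proof.
  induction L; simpl; constructor; auto. intros y. unfold topt; simpl.
  repeat split; apply contR_DEsh.
Qed.

Definition GB3 (F : nat -> list pterm) : list pterm := F 0%nat ++ F 1%nat ++ F 2%nat.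
Lemma psem_GB3 F x : psem (GB3 F) x = sum3 (fun i => psem (F i) x).
Proof. unfold GB3, sum3. rewrite !psem_app. ring. Qed.
Lemma good_GB3 F : (forall i, good (F i)) -> good (GB3 F).
Proof. intros G. unfold GB3. repeat apply good_app; auto. Qed.

Definition GB (k : nat) : list pterm :=
  GB3 (fun i => GB3 (fun j => GB3 (fun m => psq (map (topt (sh k)) (dmap m (SL i j)))))).

Lemma gb_psem k x : gb k x = psem (GB k) x.
Proof.
  unfold GB, gb. rewrite !psem_GB3. unfold sum3. rewrite !psem_GB3. unfold sum3.
  rewrite !psem_GB3. unfold sum3. rewrite !psem_psq, !psem_topt. reflexivity.
Qed.
Lemma good_GB k : good (GB k).
Proof.
  unfold GB. apply good_GB3; intros i. apply good_GB3; intros j. apply good_GB3; intros m.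
  unfold psq. apply good_plmul; apply good_topt.
Qed.

Definition ct (p : nat) : pterm :=
  match p with
  | 0%nat => PT 1 (fun u => u) (fun _ => 1) (fun _ => 1)
  | 1%nat => PT 1 (fun _ => 1) (fun u => u) (fun _ => 1)
  | _ => PT 1 (fun _ => 1) (fun _ => 1) (fun u => u) end.
Lemma psem_ct p x : psem (ct p :: nil) x = coord p x.
Proof. destruct p as [|[|p]]; simpl; unfold ptsem; simpl; ring. Qed.
Lemma good_ct p : good (ct p :: nil).
Proof.
  constructor; [|constructor]. intros y.
  destruct p as [|[|p]]; simpl; repeat split; try apply continuous_id; apply continuous_const.
Qed.

Definition XG (p k : nat) : list pterm := plmul (ct p :: nil) (GB k).
Lemma psem_XG p k x : psem (XG p k) x = coord p x * gb k x.
Proof. unfold XG. rewrite psem_plmul, psem_ct, gb_psem. reflexivity. Qed.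
Lemma good_XG p k : good (XG p k).
Proof. apply good_plmul. apply good_ct. apply good_GB. Qed.


Definition idx (q : nat) (t : dterm) : nat :=
  match q with 0%nat => di t | 1%nat => dj t | _ => dk t end.

Lemma tsem_refl s t q x : coord q s = 0 -> tsem s t (refl q x) = (-1) ^ (idx q t) * tsem s t x.
Proof.
  destruct x as [[x1 x2] x3], s as [[s1 s2] s3].
  destruct q as [|[|q]]; simpl; intros Hs; subst; unfold tsem, refl; simpl.
  - replace (- x1 - 0) with (- (x1 - 0)) by ring. rewrite DE_parity. ring.
  - replace (- x2 - 0) with (- (x2 - 0)) by ring. rewrite DE_parity. ring.
  - replace (- x3 - 0) with (- (x3 - 0)) by ring. rewrite DE_parity. ring.
Qed.

Lemma dsem_refl s q L x e : coord q s = 0 -> List.Forall (fun t => (-1) ^ (idx q t) = e) L ->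
  dsem s L (refl q x) = e * dsem s L x.
Proof.
  intros Hs HF. induction HF as [|t L Ht HF IH]; simpl. ring.
  rewrite tsem_refl, Ht, IH by auto. ring.
Qed.

Lemma dsem_refl_sq s q L x : coord q s = 0 ->
  (exists e, List.Forall (fun t => (-1) ^ (idx q t) = e) L) ->
  (dsem s L (refl q x)) ^ 2 = (dsem s L x) ^ 2.
Proof.
  intros Hs [e HF]. rewrite (dsem_refl s q L x e Hs HF).
  destruct L as [|t L]. simpl. ring.
  inversion HF; subst. replace (((-1) ^ idx q t * dsem s (t :: L) x) ^ 2)
    with (((-1) ^ 2) ^ idx q t * (dsem s (t :: L) x) ^ 2).
  replace ((-1) ^ 2) with 1 by ring. rewrite pow1. ring.
  rewrite <- pow_mult, Nat.mul_comm, pow_mult. ring.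
Qed.

Lemma par_all i j m q : exists e, List.Forall (fun t => (-1) ^ (idx q t) = e) (dmap m (SL i j)).
Proof.
  destruct i as [|[|[|i]]]; destruct j as [|[|[|j]]];
  destruct m as [|[|m]]; destruct q as [|[|q]]; simpl;
  try (exists 0; constructor; fail);
  eexists; repeat constructor; simpl; ring.
Qed.

Lemma gb_refl k q x : coord q (sh k) = 0 -> gb k (refl q x) = gb k x.
Proof.
  intros Hs. unfold gb, sum3. rewrite !(dsem_refl_sq (sh k) q _ x Hs (par_all _ _ _ q)). reflexivity.
Qed.

Lemma coord_refl q x : coord q (refl q x) = - coord q x.
Proof. destruct x as [[x1 x2] x3]; destruct q as [|[|q]]; reflexivity. Qed.

Definition ax (k : nat) : nat :=
  match k with 0%nat => 0%nat | 1%nat => 1%nat | 2%nat => 2%nat | 3%nat => 0%nat | 4%nat => 1%nat | _ => 2%nat end.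

Lemma offaxis p k : (p < 3)%nat -> (k < 6)%nat -> p <> ax k -> int_cube (psem (XG p k)) = 0.
Proof.
  intros Hp Hk Hne. apply (int_cube_odd _ p). apply good_XG.
  intros x. rewrite !psem_XG, coord_refl, gb_refl. ring.
  destruct p as [|[|[|p]]]; destruct k as [|[|[|[|[|[|k]]]]]]; simpl in *; try lia; reflexivity.
Qed.


Lemma exR (f : R -> R) (a b : R) : (forall y, continuous f y) -> ex_RInt f a b.
Proof. intros; apply (ex_RInt_continuous (V := R_CompleteNormedModule)); auto. Qed.

Lemma Chas (f : R -> R) (a b c : R) : (forall y, continuous f y) ->
  RInt f a c = RInt f a b + RInt f b c.
Proof. intros Hc. symmetry. apply (RInt_Chasles (V := R_CompleteNormedModule) f a b c); apply exR; auto. Qed.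

Lemma RInt_pos_point (f : R -> R) (u0 : R) : (forall y, continuous f y) -> (forall y, 0 <= f y) ->
  -17/10 <= u0 <= 17/10 -> 0 < f u0 -> 0 < RInt f (-2) 2.
Proof.
  intros Hc Hp Hu Hf.
  pose proof (proj2 (continuity_pt_filterlim f u0) (Hc u0)) as Hcp.
  destruct (Hcp (f u0 / 2)) as [alp [Halp Hal]]. lra.
  set (d := Rmin alp (1/10)).
  assert (Hd : 0 < d) by (apply Rmin_pos; lra).
  assert (Hd1 : d <= 1/10) by apply Rmin_r.
  assert (Hd2 : d <= alp) by apply Rmin_l.
  rewrite (Chas f (-2) (u0 - d) 2) by auto. rewrite (Chas f (u0 - d) (u0 + d) 2) by auto.
  assert (A1 : 0 <= RInt f (-2) (u0 - d)).
  { apply RInt_ge_0. lra. apply exR; auto. intros; auto. }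
  assert (A3 : 0 <= RInt f (u0 + d) 2).
  { apply RInt_ge_0. lra. apply exR; auto. intros; auto. }
  assert (A2 : RInt (fun _ => f u0 / 2) (u0 - d) (u0 + d) <= RInt f (u0 - d) (u0 + d)).
  { apply RInt_le. lra. apply exR; intros; apply continuous_const. apply exR; auto.
    intros x Hx. destruct (Req_dec x u0) as [->|Hne]. lra.
    assert (Hdist : R_dist (f x) (f u0) < f u0 / 2).
    { apply Hal. split. split. exact I. auto. simpl. unfold R_dist. apply Rabs_def1; lra. }
    unfold R_dist in Hdist. apply Rabs_def2 in Hdist. lra. }
  rewrite RInt_const in A2. unfold scal in A2; simpl in A2; unfold mult in A2; simpl in A2.
  assert (0 < (u0 + d - (u0 - d)) * (f u0 / 2)) by (apply Rmult_lt_0_compat; lra).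
  lra.
Qed.

Lemma I1_sq_pos n a : -3/2 <= a <= 3/2 -> 0 < I1 (fun u => DE n (u - a) * DE n (u - a)).
Proof.
  intros Ha. destruct (DE_nonzero n) as [t0 Ht0].
  assert (Ht : Rabs t0 < rr).
  { destruct (Rlt_le_dec (Rabs t0) rr); auto. exfalso; apply Ht0, DE_out; auto. }
  apply Rabs_def2 in Ht. unfold rr in Ht.
  apply (RInt_pos_point _ (t0 + a)).
  - intros y. apply contR_mult; apply contR_DEsh.
  - intros y. apply Rle_0_sqr.
  - lra.
  - replace (t0 + a - a) with t0 by ring. pose proof (Rsqr_pos_lt _ Ht0) as HS. unfold Rsqr in HS. lra.
Qed.


Definition eps (k : nat) : R := match k with 0%nat | 1%nat | 2%nat => 1 | _ => -1 end.
Definition TL (k : nat) : list pterm := psq (map (topt (sh k)) (DT 2 1 3 1 :: nil)).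

Lemma s3_nonneg F : (forall i, 0 <= F i) -> 0 <= sum3 F.
Proof. intros H. unfold sum3. pose proof (H 0%nat); pose proof (H 1%nat); pose proof (H 2%nat). lra. Qed.
Lemma s3_ge0 F : (forall i, 0 <= F i) -> F 0%nat <= sum3 F.
Proof. intros H. unfold sum3. pose proof (H 0%nat); pose proof (H 1%nat); pose proof (H 2%nat). lra. Qed.
Lemma s3_ge2 F : (forall i, 0 <= F i) -> F 2%nat <= sum3 F.
Proof. intros H. unfold sum3. pose proof (H 0%nat); pose proof (H 1%nat); pose proof (H 2%nat). lra. Qed.

Lemma gb_ge k x : (dsem (sh k) (DT 2 1 3 1 :: nil) x) ^ 2 <= gb k x.
Proof.
  unfold gb.
  eapply Rle_trans; [|apply s3_ge0; intros; apply s3_nonneg; intros; apply s3_nonneg; intros; apply pow2_ge_0].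
  eapply Rle_trans; [|apply s3_ge0; intros; apply s3_nonneg; intros; apply pow2_ge_0].
  eapply Rle_trans; [|apply s3_ge2; intros; apply pow2_ge_0].
  right. reflexivity.
Qed.

Lemma gb_out k x : ~ inb (sh k) x -> gb k x = 0.
Proof.
  intros Hn. unfold gb, sum3. rewrite !(fun L => dsem_out (sh k) L x Hn). ring.
Qed.

Lemma inb_eps k x : (k < 6)%nat -> inb (sh k) x -> 13/10 <= eps k * coord (ax k) x.
Proof.
  intros Hk Hb. unfold inb, rr in Hb. destruct x as [[x1 x2] x3].
  destruct k as [|[|[|[|[|[|k]]]]]]; try lia; simpl in *; lra.
Qed.

Lemma pw k x : (k < 6)%nat ->
  0 <= eps k * (coord (ax k) x * gb k x) - 13/10 * (dsem (sh k) (DT 2 1 3 1 :: nil) x) ^ 2.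
Proof.
  intros Hk. pose proof (gb_ge k x) as G.
  pose proof (pow2_ge_0 (dsem (sh k) (DT 2 1 3 1 :: nil) x)) as T0.
  destruct (classic (inb (sh k) x)) as [Hb|Hb].
  - pose proof (inb_eps k x Hk Hb). nra.
  - rewrite gb_out by auto. rewrite dsem_out by auto. lra.
Qed.

Lemma TL_pos k : (k < 6)%nat -> 0 < intval (TL k).
Proof.
  intros Hk. unfold TL, psq, plmul, topt, pmul. simpl.
  rewrite Rplus_0_r.
  destruct k as [|[|[|[|[|[|k]]]]]]; try lia; simpl;
  repeat apply Rmult_lt_0_compat; try lra; apply I1_sq_pos; lra.
Qed.

Lemma lam_pos k : (k < 6)%nat -> 0 < eps k * int_cube (psem (XG (ax k) k)).
Proof.
  intros Hk.
  set (L := pscale (eps k) (XG (ax k) k) ++ pscale (-(13/10)) (TL k)).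
  assert (GL : good L).
  { apply good_app; apply good_pscale. apply good_XG. unfold TL, psq. apply good_plmul; apply good_topt. }
  assert (N : 0 <= int_cube (psem L)).
  { apply int_cube_nonneg; auto. intros x. unfold L. rewrite psem_app, !psem_pscale, psem_XG.
    unfold TL. rewrite psem_psq, psem_topt. pose proof (pw k x Hk). lra. }
  rewrite int_cube_psem in N by auto. unfold L in N. rewrite intval_app, !intval_pscale in N.
  rewrite int_cube_psem by apply good_XG.
  pose proof (TL_pos k Hk). lra.
Qed.


Definition lamv (k : nat) : R := int_cube (psem (XG (ax k) k)).

Definition cf (beta : nat -> R) (k : nat) : R :=
  match k with
  | 0%nat => sqrt (Rmax (beta 0%nat) 0 / lamv 0)
  | 1%nat => sqrt (Rmax (beta 1%nat) 0 / lamv 1)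
  | 2%nat => sqrt (Rmax (beta 2%nat) 0 / lamv 2)
  | 3%nat => sqrt (Rmax (- beta 0%nat) 0 / - lamv 3)
  | 4%nat => sqrt (Rmax (- beta 1%nat) 0 / - lamv 4)
  | _ => sqrt (Rmax (- beta 2%nat) 0 / - lamv 5)
  end.

Definition BIG (c : nat -> R) (p : nat) : list pterm :=
  pscale (c 0%nat ^ 2) (XG p 0) ++ pscale (c 1%nat ^ 2) (XG p 1) ++ pscale (c 2%nat ^ 2) (XG p 2) ++
  pscale (c 3%nat ^ 2) (XG p 3) ++ pscale (c 4%nat ^ 2) (XG p 4) ++ pscale (c 5%nat ^ 2) (XG p 5).

Lemma int_formula c p :
  int_cube (fun x => coord p x * grad_sq (sigma c) x) =
  sum6 (fun k => c k ^ 2 * int_cube (psem (XG p k))).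
Proof.
  rewrite (int_cube_ext _ (psem (BIG c p))).
  - rewrite int_cube_psem. unfold BIG. rewrite !intval_app, !intval_pscale.
    unfold sum6. rewrite !int_cube_psem by apply good_XG. ring.
    unfold BIG. repeat apply good_app; apply good_pscale; apply good_XG.
  - intros x. rewrite grad_decomp. unfold BIG. rewrite !psem_app, !psem_pscale, !psem_XG.
    unfold sum6. ring.
Qed.

Lemma sq_sqrt_div (a l : R) : 0 < l -> sqrt (Rmax a 0 / l) ^ 2 * l = Rmax a 0.
Proof.
  intros Hl. rewrite pow2_sqrt. field. lra.
  apply Rdiv_le_0_compat. apply Rmax_r. lra.
Qed.

Lemma Rmax_diff (b : R) : Rmax b 0 - Rmax (- b) 0 = b.
Proof. unfold Rmax. destruct (Rle_dec b 0); destruct (Rle_dec (- b) 0); lra. Qed.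

Theorem theorem2p8 (beta : nat -> R) :
  exists sigma : tensor,
    tensor_smooth sigma /\ symmetric sigma /\ trace_free sigma /\
    div_free sigma /\
    (forall i j, (i < 3)%nat -> (j < 3)%nat -> compact_support_in annulus1 (sigma i j)) /\
    (forall x, Lop sigma x = 0) /\
    (forall p, (p < 3)%nat ->
       int_cube (fun x => coord p x * grad_sq sigma x) = beta p).
Proof.
  exists (sigma (cf beta)).
  split. apply sigma_smooth. split. apply sigma_sym. split. apply sigma_trace.
  split. apply sigma_div. split. intros; apply sigma_support. split. apply sigma_L.
  intros p Hp. rewrite int_formula. unfold sum6.
  pose proof (lam_pos 0 ltac:(lia)) as L0. pose proof (lam_pos 1 ltac:(lia)) as L1.
  pose proof (lam_pos 2 ltac:(lia)) as L2. pose proof (lam_pos 3 ltac:(lia)) as L3.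
  pose proof (lam_pos 4 ltac:(lia)) as L4. pose proof (lam_pos 5 ltac:(lia)) as L5.
  simpl eps in *. fold (lamv 0) (lamv 1) (lamv 2) (lamv 3) (lamv 4) (lamv 5) in *.
  destruct p as [|[|[|p]]]; try lia.
  - rewrite (offaxis 0 1), (offaxis 0 2), (offaxis 0 4), (offaxis 0 5) by (simpl; lia).
    change (int_cube (psem (XG 0 0))) with (lamv 0). change (int_cube (psem (XG 0 3))) with (lamv 3). simpl cf.
    rewrite sq_sqrt_div by lra.
    replace (sqrt (Rmax (- beta 0%nat) 0 / - lamv 3) ^ 2 * lamv 3) with
      (- (sqrt (Rmax (- beta 0%nat) 0 / - lamv 3) ^ 2 * - lamv 3)) by ring.
    rewrite sq_sqrt_div by lra. pose proof (Rmax_diff (beta 0%nat)). lra.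
  - rewrite (offaxis 1 0), (offaxis 1 2), (offaxis 1 3), (offaxis 1 5) by (simpl; lia).
    change (int_cube (psem (XG 1 1))) with (lamv 1). change (int_cube (psem (XG 1 4))) with (lamv 4). simpl cf.
    rewrite sq_sqrt_div by lra.
    replace (sqrt (Rmax (- beta 1%nat) 0 / - lamv 4) ^ 2 * lamv 4) with
      (- (sqrt (Rmax (- beta 1%nat) 0 / - lamv 4) ^ 2 * - lamv 4)) by ring.
    rewrite sq_sqrt_div by lra. pose proof (Rmax_diff (beta 1%nat)). lra.
  - rewrite (offaxis 2 0), (offaxis 2 1), (offaxis 2 3), (offaxis 2 4) by (simpl; lia).
    change (int_cube (psem (XG 2 2))) with (lamv 2). change (int_cube (psem (XG 2 5))) with (lamv 5). simpl cf.
    rewrite sq_sqrt_div by lra.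
    replace (sqrt (Rmax (- beta 2%nat) 0 / - lamv 5) ^ 2 * lamv 5) with
      (- (sqrt (Rmax (- beta 2%nat) 0 / - lamv 5) ^ 2 * - lamv 5)) by ring.
    rewrite sq_sqrt_div by lra. pose proof (Rmax_diff (beta 2%nat)). lra.
Qed.
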